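(* Let $A$ be an $m\times m$ coloring matrix and $B=(b_{pq})$ an $m'\times m$ matrix with entries in $\{0,1\}$. Let $A'$ be the $(m+m')\times(m+m')$ block matrix $$A'=\left[\begin{array}{c|c}A&0\\\hline B&0\end{array}\right].$$ Then for every $1\le i\le m$, $F_{A'}^{(i)}(x)=F_A^{(i)}(x)$, and for every $m+1\le i\le m+m'$, $$F_{A'}^{(i)}(x)=\frac{x}{1-\sum_{j=1}^m b_{i-m,j}F_A^{(j)}(x)}.$$
   Context: A plane tree is an unlabeled rooted tree in which the children of every vertex are linearly ordered. A coloring matrix is a square matrix $A=(a_{ij})$ with entries in $\{0,1\}$. An $A$-coloring of a plane tree assigns to each vertex a color (an index of a row of $A$) such that whenever a vertex of color $j$ is a child of a vertex of color $i$, $a_{ij}=1$. Let $t_A^{(i)}(n)$ be the number of pairs (plane tree with $n$ vertices, $A$-coloring of it) in which the root has color $i$, and $F_A^{(i)}(x)=\sum_{n\ge1}t_A^{(i)}(n)x^n$ (formal power series). *)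

(* Defs.v *)
From HB Require Import structures.
From mathcomp Require Import all_boot all_order all_algebra.
Set Implicit Arguments. Unset Strict Implicit. Unset Printing Implicit Defensive.
Import GRing.Theory.
Local Open Scope ring_scope.

(** A pair (plane tree, coloring of it) is the
    same thing as a plane tree whose vertices carry a color: [LNode c ts] is a
    vertex of color [c] whose ordered list of children subtrees is [ts]. *)
Inductive ltree (T : Type) := LNode of T & seq (ltree T).

Definition lroot (T : Type) (t : ltree T) : T := let: LNode c _ := t in c.

Fixpoint tsize (T : Type) (t : ltree T) : nat :=
  let: LNode _ ts := t in (sumn (map (@tsize T) ts)).+1.

Fixpoint Avalid (k : nat) (A : 'M[nat]_k) (t : ltree 'I_k) : bool :=
  let: LNode c ts := t in
  all (fun s => (A c (lroot s) == 1%N) && Avalid A s) ts.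

(** Enumeration (with fuel d) of all colored plane trees / plane forests with
    exactly n vertices and colors in 'I_k. Each object is listed exactly once. *)
Fixpoint gen (k d : nat) :
  (nat -> seq (ltree 'I_k)) * (nat -> seq (seq (ltree 'I_k))) :=
  match d with
  | 0 => (fun _ => [::], fun _ => [::])
  | d'.+1 =>
    let: (Tr, Fo) := gen k d' in
    (fun n => if n is n'.+1 then
                [seq LNode c f | c <- enum 'I_k, f <- Fo n'] else [::],
     fun n => if n is 0 then [:: [::]] else
       flatten [seq [seq t :: f | t <- Tr j, f <- Fo (n - j)%N]
               | j <- iota 1 n])
  end.

(** all colored plane trees with n vertices (fuel 2n+1 suffices) *)
Definition trees_of_size (k n : nat) : seq (ltree 'I_k) :=
  (gen k (2 * n).+1).1 n.

Definition tcount (k : nat) (A : 'M[nat]_k) (i : 'I_k) (n : nat) : nat :=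
  count (fun t => (lroot t == i) && Avalid A t) (trees_of_size k n).

Definition fps := nat -> int.
Definition fps_mul (f g : fps) : fps :=
  fun n => \sum_(j < n.+1) f j * g (n - j)%N.
Definition fps_X : fps := fun n => (n == 1%N)%:R.
Definition fps_one : fps := fun n => (n == 0%N)%:R.

(** F_A^{(i)}(x) = sum_{n>=1} t_A^{(i)}(n) x^n  (t_A^{(i)}(0) = 0). *)
Definition FA (k : nat) (A : 'M[nat]_k) (i : 'I_k) : fps :=
  fun n => (tcount A i n)%:R.

Definition is01 (p q : nat) (M : 'M[nat]_(p, q)) : Prop :=
  forall a b, M a b = 0%N \/ M a b = 1%N.

(* Main.v *)
Require Import Defs.
From HB Require Import structures.
From mathcomp Require Import all_boot all_order all_algebra.
Import GRing.Theory.
From mathcomp Require Import zify.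
Set Implicit Arguments. Unset Strict Implicit. Unset Printing Implicit Defensive.

Lemma count_sum (T : Type) (P : pred T) (s : seq T) :
  count P s = \sum_(x <- s) (P x : nat).
Proof. by elim: s => [|x s IH]; rewrite ?big_nil ?big_cons //= IH. Qed.

Section Cnt.
Variables (k : nat) (A : 'M[nat]_k).

Definition allv (c : 'I_k) (f : seq (ltree 'I_k)) :=
  all (fun s => (A c (lroot s) == 1%N) && Avalid A s) f.

Fixpoint cnt (d : nat) : ('I_k -> nat -> nat) * ('I_k -> nat -> nat) :=
  match d with
  | 0 => (fun _ _ => 0%N, fun _ _ => 0%N)
  | d'.+1 => let p := cnt d' in
    (fun c n => if n is n'.+1 then p.2 c n' else 0%N,
     fun c n => if n is 0 then 1%N else
       \sum_(j <- iota 1 n) (\sum_(c' : 'I_k | A c c' == 1%N) p.1 c' j) * p.2 c (n - j))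
  end.

Lemma gen_S d : gen k d.+1 =
  (fun n => if n is n'.+1 then
                [seq LNode c f | c <- enum 'I_k, f <- (gen k d).2 n'] else [::],
   fun n => if n is 0 then [:: [::]] else
       flatten [seq [seq t :: f | t <- (gen k d).1 j, f <- (gen k d).2 (n - j)%N]
               | j <- iota 1 n]).
Proof. by rewrite /=; case: (gen k d). Qed.

Lemma count_root (c : 'I_k) s :
  count (fun t => (A c (lroot t) == 1%N) && Avalid A t) s =
  \sum_(c' : 'I_k | A c c' == 1%N) count (fun t => (lroot t == c') && Avalid A t) s.
Proof.
elim: s => [|t s IH]; first by rewrite big1.
rewrite /= big_split /= IH; congr (_ + _)%N.
case: (boolP (A c (lroot t) == 1%N)) => H.
  rewrite (bigD1 (lroot t)) //= eqxx big1 ?addn0 // => i /andP [_ /negbTE].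
  by rewrite eq_sym => ->.
by rewrite big1 // => i Hi; case: eqP => // E; rewrite E Hi in H.
Qed.

Lemma count_forest (Tr : nat -> seq (ltree 'I_k)) (Fo : nat -> seq (seq (ltree 'I_k)))
  (t1 : 'I_k -> nat -> nat) (t2 : 'I_k -> nat -> nat) c n :
  (forall c n, count (fun t => (lroot t == c) && Avalid A t) (Tr n) = t1 c n) ->
  (forall c n, count (allv c) (Fo n) = t2 c n) ->
  count (allv c) (flatten [seq [seq t :: f | t <- Tr j, f <- Fo (n - j)%N] | j <- iota 1 n])
  = \sum_(j <- iota 1 n) (\sum_(c' : 'I_k | A c c' == 1%N) t1 c' j) * t2 c (n - j)%N.
Proof.
move=> IH1 IH2.
rewrite count_flatten sumnE big_map.
rewrite big_map; apply: eq_bigr => j _.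
transitivity (count (fun t => (A c (lroot t) == 1%N) && Avalid A t) (Tr j) * count (allv c) (Fo (n-j)%N))%N; last first.
  by rewrite count_root IH2; congr (_ * _)%N; apply: eq_bigr => *; rewrite IH1.
rewrite count_sum big_allpairs_dep /= count_sum big_distrl /=.
apply: eq_bigr => t _; rewrite count_sum big_distrr /=.
by apply: eq_bigr => f _; rewrite mulnb.
Qed.

Lemma count_tree (Fo : seq (seq (ltree 'I_k))) c :
  count (fun t => (lroot t == c) && Avalid A t) [seq LNode c' f | c' <- enum 'I_k, f <- Fo]
  = count (allv c) Fo.
Proof.
rewrite count_sum big_allpairs_dep /= count_sum exchange_big /=.
apply: eq_bigr => f _.
rewrite big_enum /= (bigD1 c) //= eqxx big1 ?addn0 // => i /negbTE ->.
by [].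
Qed.

Lemma count_gen d :
  (forall c n, count (fun t => (lroot t == c) && Avalid A t) ((gen k d).1 n) = (cnt d).1 c n) /\
  (forall c n, count (allv c) ((gen k d).2 n) = (cnt d).2 c n).
Proof.
elim: d => [|d [IH1 IH2]]; first by split.
rewrite gen_S; split => c [|n] //.
- by rewrite /= count_tree IH2.
- exact: count_forest.
Qed.

Lemma cnt_S2 d c n : (cnt d.+1).2 c n.+1 =
  \sum_(j <- iota 1 n.+1) (\sum_(c' : 'I_k | A c c' == 1%N) (cnt d).1 c' j) * (cnt d).2 c (n.+1 - j).
Proof. by []. Qed.

Lemma cnt_S1 d c n : (cnt d.+1).1 c n.+1 = (cnt d).2 c n.
Proof. by []. Qed.

Lemma cnt_step d : forall n c,
  ((2 * n <= d)%N -> (cnt d).1 c n = (cnt d.+1).1 c n) /\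
  ((2 * n).+1 <= d -> (cnt d).2 c n = (cnt d.+1).2 c n).
Proof.
elim: d => [|d IH] n c.
  by case: n.
split.
  case: n => [|n] // H; rewrite [LHS]/= [RHS]/=.
  by apply: (proj2 (IH n c)); lia.
case: n => [|n] // H; rewrite !cnt_S2.
apply: eq_big_seq => j; rewrite mem_iota => /andP [Hj1 Hj2].
congr (_ * _)%N.
  by apply: eq_bigr => c' _; apply: (proj1 (IH _ _)); lia.
by apply: (proj2 (IH _ _)); lia.
Qed.

Lemma cnt_mono d d' n c : (2 * n <= d)%N -> (d <= d')%N ->
  (cnt d).1 c n = (cnt d').1 c n /\ ((2 * n).+1 <= d -> (cnt d).2 c n = (cnt d').2 c n).
Proof.
move=> H; elim: d' => [|d' IH] Hd.
  by have -> : d = 0%N by lia.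
case: (ltngtP d d'.+1) Hd => // [Hlt|->] _; last by [].
have [IH1 IH2] := IH Hlt.
have [S1 S2] := cnt_step d' n c.
split; first by rewrite IH1 S1 //; lia.
by move=> H'; rewrite IH2 // S2 //; lia.
Qed.

Lemma cnt_stab1 d d' n c : (2 * n <= d)%N -> (2 * n <= d')%N ->
  (cnt d).1 c n = (cnt d').1 c n.
Proof.
move=> H1 H2; case: (leqP d d') => H.
  exact: (cnt_mono c H1 H).1.
by symmetry; apply: (cnt_mono c H2 (ltnW H)).1.
Qed.

Lemma cnt_stab2 d d' n c : ((2 * n).+1 <= d)%N -> ((2 * n).+1 <= d')%N ->
  (cnt d).2 c n = (cnt d').2 c n.
Proof.
move=> H1 H2; case: (leqP d d') => H.
  by apply: (cnt_mono c _ H).2 => //; lia.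
by symmetry; apply: (cnt_mono c _ (ltnW H)).2 => //; lia.
Qed.

Lemma tcount_cnt n c : tcount A c n = (cnt (2 * n).+1).1 c n.
Proof. by rewrite /tcount /trees_of_size (count_gen _).1. Qed.
End Cnt.

From Stdlib Require Import FunctionalExtensionality.

Section Block.
Variables (m m' : nat) (A : 'M[nat]_m) (B : 'M[nat]_(m', m)).
Local Notation A' := (block_mx A 0 B 0).

Lemma sum_split_l (F : 'I_(m + m') -> nat) c :
  \sum_(c' | A' (lshift m' c) c' == 1%N) F c' =
  \sum_(c' < m | A c c' == 1%N) F (lshift m' c').
Proof.
rewrite big_split_ord /=.
under eq_bigl => i do rewrite block_mxEul.
rewrite [X in (_ + X)%N]big1 ?addn0 // => i.
by rewrite block_mxEur mxE.
Qed.

Lemma sum_split_r (F : 'I_(m + m') -> nat) p :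
  \sum_(c' | A' (rshift m p) c' == 1%N) F c' =
  \sum_(c' < m | B p c' == 1%N) F (lshift m' c').
Proof.
rewrite big_split_ord /=.
under eq_bigl => i do rewrite block_mxEdl.
rewrite [X in (_ + X)%N]big1 ?addn0 // => i.
by rewrite block_mxEdr mxE.
Qed.

Lemma cnt_lshift d : forall c n,
  (cnt A' d).1 (lshift m' c) n = (cnt A d).1 c n /\
  (cnt A' d).2 (lshift m' c) n = (cnt A d).2 c n.
Proof.
elim: d => [|d IH] c n; first by [].
split; first by case: n => [|n] //=; rewrite (IH c n).2.
case: n => [|n] //; rewrite !cnt_S2.
apply: eq_bigr => j _; rewrite sum_split_l (IH c _).2; congr (_ * _)%N.
by apply: eq_bigr => i _; rewrite (IH i j).1.
Qed.

Lemma part1 c : FA A' (lshift m' c) = FA A c.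
Proof.
apply: functional_extensionality => n.
by rewrite /FA !tcount_cnt (cnt_lshift _ _ _).1.
Qed.

Variable p : 'I_m'.
Definition H n := (cnt A' (2 * n).+1).2 (rshift m p) n.
Definition g j := \sum_(i < m | B p i == 1%N) tcount A i j.

Lemma F'_S n : tcount A' (rshift m p) n.+1 = H n.
Proof. by rewrite tcount_cnt cnt_S1 /H; apply: cnt_stab2; lia. Qed.

Lemma F'_0 c : tcount A' c 0 = 0%N.
Proof. by rewrite tcount_cnt. Qed.

Lemma g_0 : g 0 = 0%N.
Proof. by rewrite /g big1 // => i _; rewrite tcount_cnt. Qed.

Lemma H_S n : H n.+1 = \sum_(j <- iota 1 n.+1) g j * H (n.+1 - j).
Proof.
rewrite /H cnt_S2.
apply: eq_big_seq => j; rewrite mem_iota => /andP [Hj1 Hj2].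
congr (_ * _)%N; last by apply: cnt_stab2; lia.
rewrite sum_split_r /g; apply: eq_bigr => i _.
by rewrite (cnt_lshift _ _ _).1 tcount_cnt; apply: cnt_stab1; lia.
Qed.

Lemma conv M : H M.+1 = \sum_(i < M.+1) H i * g (M.+1 - i).
Proof.
rewrite H_S -[1%N]/(1 + 0)%N iotaDl big_map -[iota 0 M.+1]/(index_iota 0 M.+1) big_nat_rev -(big_mkord xpredT (fun i => H i * g (M.+1 - i))%N).
apply: eq_big_nat => i /andP [_ Hi].
rewrite mulnC; congr (H _ * g _)%N; lia.
Qed.
End Block.

Local Open Scope ring_scope.
Theorem theorem24 (m m' : nat) (A : 'M[nat]_m) (B : 'M[nat]_(m', m)) :
  is01 A -> is01 B ->
  (forall i : 'I_m, FA (block_mx A 0 B 0) (lshift m' i) = FA A i) /\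
  (forall p : 'I_m',
     fps_mul (FA (block_mx A 0 B 0) (rshift m p))
             (fun n => fps_one n - \sum_(j < m) (B p j)%:R * FA A j n)
     = fps_X).
Proof.
move=> _ HB; split; first exact: part1.
move=> p; apply: functional_extensionality => n.
have G_eq : forall j, \sum_(i < m) (B p i)%:R * FA A i j = ((g A B p j)%:R : int).
  move=> j; rewrite /g (big_mkcond (fun i => B p i == 1%N)) natr_sum; apply: eq_bigr => i _.
  by rewrite /FA; case: (HB p i) => -> /=; rewrite ?mul0r ?mul1r.
rewrite /fps_mul /fps_X /fps_one.
case: n => [|N].
  by rewrite big_ord_recl big_ord0 /FA F'_0 mul0r add0r.
rewrite big_ord_recl {1}/FA F'_0 mul0r add0r.
under eq_bigr => i _ do rewrite lift0 subSS /FA F'_S G_eq.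
rewrite big_ord_recr /= subnn g_0 subr0 mulr1.
case: N => [|M]; first by rewrite big_ord0 add0r.
under eq_bigr => i _ do rewrite subn_eq0 leqNgt ltn_ord /= sub0r mulrN -natrM.
by rewrite conv natr_sum sumrN addrC subrr.
Qed.
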